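(* Let an instance with $n$ agents $[n]=\{1,\dots,n\}$, $m$ indivisible items $[m]$ and binary additive valuations be given (notation as in the context). Then every stable allocation is optimal under $\mathsf{LexiMin}$, i.e. it minimizes $\mathsf{LexiMin}(\mathbf{p}(\chi))=\sum_{i=1}^n m^{\,m-h_i}$ over all clean max-USW allocations $\chi$. Consequently, the profiles of any two stable allocations are equal up to a permutation of the coordinates.
   Context: Each agent $i\in[n]$ has a set $L_i\subseteq[m]$ of liked items, and valuation $v_i(S)=|S\cap L_i|$ for $S\subseteq[m]$. An allocation $\chi=(\chi_1,\dots,\chi_n)$ is a tuple of pairwise disjoint subsets of $[m]$ (not necessarily covering $[m]$). It is clean if $\chi_i\subseteq L_i$ for all $i$, and max-USW if it maximizes $\sum_i v_i(\chi_i)$ among all allocations. Throughout, ''allocation'' means a clean max-USW allocation. The profile of $\chi$ is $\mathbf{p}(\chi)=(h_1,\dots,h_n)$ with $h_i=|\chi_i|$. Given $\chi$, form a directed graph on $[n]$ with an arc $(i,i')$, $i\neq i'$, whenever some item $o\in\chi_i$ satisfies $o\in L_{i'}$. $\chi$ admits a transfer $u\to v$ if there is a simple directed path from $u$ to $v$ with at least one arc in this graph (reallocating the items along the path makes $u$ lose one item and $v$ gain one). A transfer $u\to v$ is narrowing if $h_u\ge h_v+2$. $\chi$ is stable if it admits no narrowing transfer. $\mathsf{LexiMin}(h_1,\dots,h_n)=\sum_i m^{m-h_i}$; an allocation is optimal under a criterion $f$ if it minimizes $f(\mathbf{p}(\chi))$ over all clean max-USW allocations. *)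

(* Defs.v *)
From mathcomp Require Import all_boot all_fingroup.
Set Implicit Arguments. Unset Strict Implicit. Unset Printing Implicit Defensive.

(* Agents are 'I_n, items are 'I_m; L i is the set of items liked by agent i. *)
Definition alloc (n m : nat) := {ffun 'I_n -> {set 'I_m}}.

Section Defs.
Variables (n m : nat) (L : 'I_n -> {set 'I_m}).

Definition val (i : 'I_n) (S : {set 'I_m}) : nat := #|S :&: L i|.

Definition is_alloc (chi : alloc n m) : Prop :=
  forall i j : 'I_n, i != j -> [disjoint chi i & chi j].

Definition usw (chi : alloc n m) : nat := \sum_(i < n) val i (chi i).

Definition clean (chi : alloc n m) : Prop := forall i, chi i \subset L i.

Definition max_usw (chi : alloc n m) : Prop :=
  is_alloc chi /\ forall chi' : alloc n m, is_alloc chi' -> usw chi' <= usw chi.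

(* "allocation" in the paper: clean max-USW allocation *)
Definition clean_max_usw (chi : alloc n m) : Prop := clean chi /\ max_usw chi.

Definition profile (chi : alloc n m) (i : 'I_n) : nat := #|chi i|.

Definition arc (chi : alloc n m) : rel 'I_n :=
  fun i i' => (i != i') && [exists o, (o \in chi i) && (o \in L i')].

Definition transfer (chi : alloc n m) (u v : 'I_n) : Prop :=
  exists p : seq 'I_n, [/\ p != [::], path (arc chi) u p, last u p = v & uniq (u :: p)].

Definition narrowing (chi : alloc n m) (u v : 'I_n) : Prop :=
  transfer chi u v /\ profile chi v + 2 <= profile chi u.

Definition stable (chi : alloc n m) : Prop :=
  clean_max_usw chi /\ forall u v, ~ narrowing chi u v.

Definition leximin (h : 'I_n -> nat) : nat := \sum_(i < n) m ^ (m - h i).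

Definition leximin_optimal (chi : alloc n m) : Prop :=
  clean_max_usw chi /\
  forall chi' : alloc n m, clean_max_usw chi' ->
    leximin (profile chi) <= leximin (profile chi').

End Defs.

(* Main.v *)
Require Import Defs.
From mathcomp Require Import all_boot all_fingroup.
From mathcomp Require Import zify.

Set Implicit Arguments. Unset Strict Implicit. Unset Printing Implicit Defensive.

Section Proofs.
Variables (n m : nat) (L : 'I_n -> {set 'I_m}).
Implicit Types chi : alloc n m.

Lemma disjP (A B : {set 'I_m}) :
  (forall x, x \in A -> x \in B -> False) -> [disjoint A & B].
Proof.
move=> H; rewrite disjoint_subset; apply/subsetP => x xA; rewrite inE /=.
by apply/negP => xB; exact: H x xA xB.
Qed.

Lemma sum_lt (g g' : 'I_n -> nat) u :
  (forall i, g' i <= g i) -> g' u < g u -> \sum_i g' i < \sum_i g i.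
Proof.
move=> le lt; rewrite (bigD1 u) //= [X in _ < X](bigD1 u) //= -addSn.
by rewrite leq_add //; apply: leq_sum => i _; exact: le.
Qed.

Lemma sum_delta (u : 'I_n) : \sum_(i < n) (i == u : nat) = 1.
Proof. by rewrite (bigD1 u) //= eqxx big1 // => i /negbTE ->. Qed.

Lemma usw_clean chi : clean L chi -> usw L chi = \sum_i #|chi i|.
Proof.
by move=> cl; apply: eq_bigr => i _; rewrite /Defs.val (setIidPl (cl i)).
Qed.

Lemma sum_eq chi chi' : clean_max_usw L chi -> clean_max_usw L chi' ->
  \sum_i #|chi i| = \sum_i #|chi' i|.
Proof.
move=> [c1 [a1 m1]] [c2 [a2 m2]]; rewrite -!usw_clean //.
by apply/eqP; rewrite eqn_leq m1 ?m2.
Qed.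

Lemma alloc_mod chi chi' w o : is_alloc chi ->
  (forall i x, x \in chi' i -> (x \in chi i /\ x != o) \/ (x = o /\ i = w)) ->
  is_alloc chi'.
Proof.
move=> al H i j ij; apply: disjP => x xi xj.
case: (H _ _ xi) => [[xi' xo]|[xo iw]]; case: (H _ _ xj) => [[xj' xo']|[xo' jw]].
- by move: (al _ _ ij) => /disjointFr /(_ xi'); rewrite xj'.
- by rewrite xo' eqxx in xo.
- by rewrite xo eqxx in xo'.
- by rewrite iw jw eqxx in ij.
Qed.

Lemma profile_le chi i : profile chi i <= m.
Proof. by rewrite /profile (leq_trans (max_card _)) // card_ord. Qed.

Lemma max1 chi w o : clean_max_usw L chi -> o \in L w -> exists b, o \in chi b.
Proof.
move=> [cl [al mx]] oL.
case: (boolP [exists b, o \in chi b]) => [/existsP[b ob]|/existsPn no].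
  by exists b.
pose chi3 : alloc n m := [ffun i => if i == w then o |: chi w else chi i].
have al3 : is_alloc chi3.
  apply: (alloc_mod (w := w) (o := o) al) => i x; rewrite ffunE.
  case: (eqVneq i w) => [->|iw] xi.
    case/setU1P: xi => [->|xw]; first by right.
    by left; split => //; apply: contraNneq (no w) => <-.
  by left; split => //; apply: contraNneq (no i) => <-.
suff: usw L chi < usw L chi3 by rewrite ltnNge (mx _ al3).
apply: (sum_lt (u := w)) => [i|]; rewrite /Defs.val ffunE.
  case: (eqVneq i w) => [->|//]; apply: subset_leq_card; apply: setSI.
  exact: subsetUr.
rewrite eqxx (setIidPl (cl w)) (setIidPl _); last first.
  by rewrite subUset sub1set oL cl.
by rewrite cardsU1 (negPf (no w)).
Qed.

Lemma move1 chi u w o : clean_max_usw L chi -> u != w -> o \in chi u -> o \in L w ->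
  exists chi', [/\ clean_max_usw L chi',
    (forall i, profile chi' i + (i == u) = profile chi i + (i == w)) &
    (forall i, i != u -> chi i \subset chi' i)].
Proof.
move=> [cl [al mx]] uw ou oL.
have ow : o \notin chi w by rewrite (disjointFr (al _ _ uw) ou).
pose chi' : alloc n m := [ffun i => if i == u then chi u :\ o
                                   else if i == w then o |: chi w else chi i].
have prof : forall i, profile chi' i + (i == u) = profile chi i + (i == w).
  move=> i; rewrite /profile ffunE.
  case: (eqVneq i u) => [->|iu]; first by rewrite (negPf uw) (cardsD1 o (chi u)) ou; lia.
  case: (eqVneq i w) => [->|iw]; first by rewrite cardsU1 ow; lia.
  by [].
have cl' : clean L chi'.
  move=> i; rewrite ffunE; case: (eqVneq i u) => [->|iu].
    by apply: subset_trans (cl u); apply: subsetDl.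
  case: (eqVneq i w) => [->|iw] //; by rewrite subUset sub1set oL cl.
have al' : is_alloc chi'.
  apply: (alloc_mod (w := w) (o := o) al) => i x; rewrite ffunE.
  case: (eqVneq i u) => [->|iu].
    by rewrite !inE => /andP[xo xu]; left.
  case: (eqVneq i w) => [->|iw] xi.
    case/setU1P: xi => [->|xw]; first by right.
    by left; split => //; apply: contraNneq ow => <-.
  left; split => //; apply/eqP => xo; subst x.
  by move: (al _ _ iu) => /disjointFr /(_ xi); rewrite ou.
have uswe : usw L chi' = usw L chi.
  rewrite !usw_clean //; apply/eqP; rewrite -(eqn_add2r 1).
  rewrite -{1}(sum_delta u) -(sum_delta w) -!big_split /=.
  by apply/eqP; apply: eq_bigr => i _; exact: prof.
exists chi'; split => //.
  by split => //; split => // chi2 a2; rewrite uswe; exact: mx.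
move=> i iu; rewrite ffunE (negPf iu); case: (eqVneq i w) => [->|//].
exact: subsetUr.
Qed.

Lemma do_path p : forall chi u, clean_max_usw L chi ->
  path (Defs.arc L chi) u p -> uniq (u :: p) -> p != [::] ->
  exists chi', clean_max_usw L chi' /\
    forall i, profile chi' i + (i == u) = profile chi i + (i == last u p).
Proof.
elim: p => [//|w p IH] chi u cm /= /andP[a pa] /andP[nu up] _.
move: a; rewrite /Defs.arc => /andP[uw /existsP[o /andP[ou oL]]].
have [chi1 [cm1 pr1 sub1]] := move1 cm uw ou oL.
case: (eqVneq p [::]) => [pe|pne].
  by subst p; exists chi1.
have pa1 : path (Defs.arc L chi1) w p.
  apply: (sub_in_path (P := predC1 u)) pa; last first.
    apply/allP => x xin; rewrite /= ; apply: contraNneq nu => <-; exact: xin.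
  move=> x y xu _; rewrite /Defs.arc => /andP[xy /existsP[o' /andP[o'x o'L]]].
  rewrite xy /=; apply/existsP; exists o'; rewrite o'L andbT.
  exact: (subsetP (sub1 x xu)).
have [chi2 [cm2 pr2]] := IH chi1 w cm1 pa1 up pne.
exists chi2; split => // i.
have := pr1 i; have := pr2 i; lia.
Qed.

Lemma exch chi chi' u : clean_max_usw L chi -> clean_max_usw L chi' ->
  profile chi' u < profile chi u ->
  exists v, [/\ profile chi v < profile chi' v, transfer L chi u v & transfer L chi' v u].
Proof.
move=> cm cm' lt.
pose g : rel 'I_n := fun a b => (a != b) && [exists o, (o \in chi a) && (o \in chi' b)].
case: (boolP [exists v, connect g u v && (profile chi v < profile chi' v)]).
  case/existsP => v /andP[/connectP[p pp vl] ltv].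
  case: (shortenP pp) vl => p' pp' up' _ vl.
  have uv : u != v by apply/eqP => uv; move: ltv; rewrite -uv; lia.
  have p'n : p' != [::] by apply: contraNneq uv => pe; rewrite vl pe.
  exists v; split => //.
    exists p'; split => //; apply: sub_path pp' => a b /andP[ab /existsP[o /andP[oa ob]]].
    rewrite /Defs.arc ab /=; apply/existsP; exists o; rewrite oa /=.
    by case: cm' => cl' _; exact: (subsetP (cl' b)).
  exists (rev (belast u p')); split.
  - by rewrite -size_eq0 size_rev size_belast size_eq0.
  - rewrite vl rev_path; apply: sub_path pp' => a b /andP[ab /existsP[o /andP[oa ob]]].
    rewrite /Defs.arc eq_sym ab /=; apply/existsP; exists o; rewrite ob /=.
    by case: cm => cl _; exact: (subsetP (cl a)).
  - have e : v :: rev (belast u p') = rev (u :: p') by rewrite [u :: p']lastI rev_rcons vl.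
    by rewrite -(last_cons u) e rev_cons last_rcons.
  - have e : v :: rev (belast u p') = rev (u :: p') by rewrite [u :: p']lastI rev_rcons vl.
    by rewrite e rev_uniq.
move/existsPn => H; exfalso.
have H' : forall v, connect g u v -> profile chi' v <= profile chi v.
  by move=> v cv; move: (H v); rewrite cv /= -leqNgt.
pose S := [set v | connect g u v].
pose F := fun i => if i \in S then chi i else set0.
pose F' := fun i => if i \in S then chi' i else set0.
have cardF : forall (c : alloc n m), is_alloc c ->
    #|\bigcup_i (if i \in S then c i else set0)| = \sum_i (if i \in S then #|c i| else 0).
  move=> c al; rewrite -sum1_card partition_disjoint_bigcup.
    by apply: eq_bigr => i _; rewrite sum1_card; case: ifP => // _; rewrite cards0.
  move=> i j ij; apply: disjP => x; case: ifP => _; last by rewrite inE.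
  case: ifP => _; last by rewrite inE.
  by move=> xi xj; move: (al _ _ ij) => /disjointFr /(_ xi); rewrite xj.
have sub : \bigcup_i F i \subset \bigcup_i F' i.
  apply/subsetP => x /bigcupP[i _]; rewrite /F; case: ifP => [iS xi|_]; last by rewrite inE.
  have xL : x \in L i by case: cm => cl _; exact: (subsetP (cl i)).
  have [b xb] := max1 cm' xL.
  apply/bigcupP; exists b => //; rewrite /F'.
  have -> : b \in S.
    case: (eqVneq i b) => [<-//|ib]; rewrite inE; apply: connect_trans (_ : connect g u i) _.
      by move: iS; rewrite inE.
    by apply: connect1; rewrite /g ib /=; apply/existsP; exists x; rewrite xi xb.
  by [].
have al : is_alloc chi by case: cm => _ [].
have al' : is_alloc chi' by case: cm' => _ [].
have := subset_leq_card sub; rewrite /F /F' !cardF // leqNgt => /negP; apply.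
apply: (sum_lt (u := u)).
  by move=> i; case: ifP => // iS; apply: H'; move: iS; rewrite inE.
by rewrite inE connect0.
Qed.


Definition E chi chi' := \sum_i (profile chi i - profile chi' i).

Lemma base chi chi' : clean_max_usw L chi -> clean_max_usw L chi' ->
  E chi chi' = 0 -> forall i, profile chi' i = profile chi i.
Proof.
move=> cm cm' e0.
have le : forall i, profile chi i <= profile chi' i.
  move=> i; rewrite -subn_eq0 -leqn0 -e0 /E (bigD1 i) //=; exact: leq_addr.
case: (boolP [exists i, profile chi i < profile chi' i]).
  case/existsP => i lt; exfalso.
  have := sum_lt le lt; rewrite (sum_eq cm cm'); by rewrite ltnn.
move/existsPn => H i; apply/eqP; rewrite eqn_leq le andbT.
by move: (H i); rewrite -leqNgt.
Qed.

Lemma step chi chi' : stable L chi -> clean_max_usw L chi' -> 0 < E chi chi' ->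
  exists u v chi'', [/\ clean_max_usw L chi'', E chi chi'' < E chi chi', u != v,
     (forall i, profile chi'' i + (i == v) = profile chi' i + (i == u))
     & profile chi' u < profile chi' v /\
       (stable L chi' -> profile chi' v = (profile chi' u).+1)].
Proof.
move=> [cm nn] cm' Epos.
case: (boolP [exists u, profile chi' u < profile chi u]); last first.
  move/existsPn => H; exfalso; move: Epos; rewrite /E big1 // => i _.
  by apply/eqP; rewrite subn_eq0 leqNgt H.
case/existsP => u ltu.
have [v [ltv T1 [p [pn pp pl pu]]]] := exch cm cm' ltu.
have uv : u != v by apply/eqP => uv; move: ltv; rewrite -uv; lia.
have le1 : profile chi u <= (profile chi v).+1.
  by rewrite leqNgt; apply/negP => lt; apply: (nn u v); split => //; lia.
have [chi'' [cm'' pr]] := do_path cm' pp pu pn.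
rewrite pl in pr.
exists u, v, chi''; split => //.
- apply: (sum_lt (u := u)) => [i|].
    have := pr i; case: (eqVneq i v) => [->|_].
      by rewrite [v == u]eq_sym (negPf uv) /=; lia.
    case: (i == u) => /=; lia.
  have := pr u; rewrite eqxx (negPf uv) /=; lia.
split; first lia.
- move=> [_ nn']; have : ~ narrowing L chi' v u by apply: nn'.
  move=> nar; apply/eqP; rewrite eqn_leq; apply/andP; split; last by lia.
  by rewrite leqNgt; apply/negP => lt; apply: nar; split; [exists p|lia].
Qed.

Lemma sum_two (F : 'I_n -> nat) u v : u != v ->
  \sum_i F i = F u + F v + \sum_(i | (i != u) && (i != v)) F i.
Proof.
move=> uv; rewrite (bigD1 u) //= (bigD1 v) /=; last by rewrite eq_sym.
by rewrite addnA; congr (_ + _ + _); apply: eq_bigl => i; rewrite andbC.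
Qed.

Lemma lex_two (h h' : 'I_n -> nat) u v : u != v ->
  (forall i, i != u -> i != v -> h' i = h i) ->
  leximin m h' + (m ^ (m - h u) + m ^ (m - h v)) =
  leximin m h + (m ^ (m - h' u) + m ^ (m - h' v)).
Proof.
move=> uv eq; rewrite /leximin !(sum_two _ uv).
have -> : \sum_(i | (i != u) && (i != v)) m ^ (m - h' i) =
          \sum_(i | (i != u) && (i != v)) m ^ (m - h i).
  by apply: eq_bigr => i /andP[iu iv]; rewrite eq.
lia.
Qed.

Lemma fconv x c : x <= c ->
  m ^ (m - c) + m ^ (m - x.+1) <= m ^ (m - c.+1) + m ^ (m - x).
Proof.
move=> xc.
case: (ltnP c m) => cm.
  have m0 : 0 < m by lia.
  have -> : m - c = (m - c.+1).+1 by lia.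
  have -> : m - x = (m - x.+1).+1 by lia.
  rewrite !expnS.
  have : m ^ (m - c.+1) <= m ^ (m - x.+1) by apply: leq_pexp2l => //; lia.
  nia.
have -> : m - c = 0 by lia.
have -> : m - c.+1 = 0 by lia.
rewrite leq_add2l; case: (posnP m) => [->|m0]; first by rewrite !sub0n.
by apply: leq_pexp2l => //; lia.
Qed.

Lemma fconv_strict x c : x < c -> c < m ->
  m ^ (m - c) + m ^ (m - x.+1) < m ^ (m - c.+1) + m ^ (m - x).
Proof.
move=> xc cm.
have m1 : 1 < m by lia.
have -> : m - c = (m - c.+1).+1 by lia.
have -> : m - x = (m - x.+1).+1 by lia.
rewrite !expnS.
have : m ^ (m - c.+1) < m ^ (m - x.+1) by rewrite ltn_exp2l //; lia.
nia.
Qed.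

Lemma opt_nonarrow chi : clean_max_usw L chi ->
  (forall chi', clean_max_usw L chi' -> leximin m (profile chi) <= leximin m (profile chi')) ->
  forall u v, ~ narrowing L chi u v.
Proof.
move=> cm opt u v [[p [pn pp pl pu]] le].
have uv : u != v by apply/eqP => uv; move: le; rewrite uv; lia.
have [chi3 [cm3 pr]] := do_path cm pp pu pn.
rewrite pl in pr.
have hm := profile_le chi u.
have e := lex_two uv (h := profile chi) (h' := profile chi3) _.
have := opt _ cm3; apply/negP; rewrite -ltnNge.
have pu3 := pr u; have pv3 := pr v; rewrite eqxx (negPf uv) in pu3.
rewrite eq_sym (negPf uv) eqxx in pv3.
have : m ^ (m - profile chi3 u) + m ^ (m - profile chi3 v) <
       m ^ (m - profile chi u) + m ^ (m - profile chi v).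
  have -> : profile chi3 u = (profile chi u).-1 by move: pu3 => /=; lia.
  have -> : profile chi3 v = (profile chi v).+1 by move: pv3 => /=; lia.
  have -> : profile chi u = ((profile chi u).-1).+1 by lia.
  rewrite -pred_Sn; apply: fconv_strict; lia.
have := e _; move=> {}e.
suff H : forall i, i != u -> i != v -> profile chi3 i = profile chi i.
  move: (e H); lia.
move=> i iu iv; have := pr i; rewrite (negPf iu) (negPf iv); lia.
Qed.

Lemma part1 chi : stable L chi -> forall k chi', E chi chi' <= k ->
  clean_max_usw L chi' -> leximin m (profile chi) <= leximin m (profile chi').
Proof.
move=> st k; elim: k => [|k IH] chi' Ek cm'.
  have e : E chi chi' = 0 by lia.
  by rewrite /leximin; apply: eq_leq; apply: eq_bigr => i _; rewrite (base st.1 cm' e).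
case: (posnP (E chi chi')) => [e|Ep].
  by rewrite /leximin; apply: eq_leq; apply: eq_bigr => i _; rewrite (base st.1 cm' e).
have [u [v [chi'' [cm'' lt uv pr [le _]]]]] := step st cm' Ep.
apply: leq_trans (IH chi'' _ cm'') _; first by lia.
have vu : v != u by rewrite eq_sym.
have e := lex_two vu (h := profile chi') (h' := profile chi'') _.
have pu3 := pr u; have pv3 := pr v; rewrite eqxx (negPf uv) in pu3.
rewrite eq_sym (negPf uv) eqxx in pv3.
suff H : forall i, i != v -> i != u -> profile chi'' i = profile chi' i.
  move: (e H).
  have : m ^ (m - profile chi'' v) + m ^ (m - profile chi'' u) <=
         m ^ (m - profile chi' v) + m ^ (m - profile chi' u).
    have -> : profile chi'' u = (profile chi' u).+1 by move: pu3 => /=; lia.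
    have -> : profile chi'' v = (profile chi' v).-1 by move: pv3 => /=; lia.
    have -> : profile chi' v = ((profile chi' v).-1).+1 by lia.
    rewrite -pred_Sn; apply: fconv; lia.
  lia.
move=> i iv iu; have := pr i; rewrite (negPf iu) (negPf iv); lia.
Qed.

Lemma part1' chi : stable L chi -> leximin_optimal L chi.
Proof. move=> st; split; first exact: st.1. move=> chi' cm'; exact: part1 st _ _ (leqnn _) cm'. Qed.

Lemma part2 chi1 : stable L chi1 -> forall k chi', E chi1 chi' <= k -> stable L chi' ->
  exists s : {perm 'I_n}, forall i, profile chi' i = profile chi1 (s i).
Proof.
move=> st k; elim: k => [|k IH] chi' Ek st'.
  have e : E chi1 chi' = 0 by lia.
  by exists 1%g => i; rewrite perm1 (base st.1 st'.1 e).
case: (posnP (E chi1 chi')) => [e|Ep].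
  by exists 1%g => i; rewrite perm1 (base st.1 st'.1 e).
have [u [v [chi'' [cm'' lt uv pr [le eqs]]]]] := step st st'.1 Ep.
have e1 := eqs st'.
have tp : forall i, profile chi'' i = profile chi' (tperm u v i).
  move=> i; have := pr i; case: tpermP => [->|->|iu iv].
  - rewrite eqxx (negPf uv) /=; lia.
  - rewrite eqxx eq_sym (negPf uv) /=; lia.
  - by move/eqP: iu; move/eqP: iv => iv iu; rewrite (negPf iu) (negPf iv); lia.
have st'' : stable L chi''.
  split => //; apply: opt_nonarrow => // chi3 cm3.
  have -> : leximin m (profile chi'') = leximin m (profile chi').
    rewrite /leximin [RHS](reindex_inj (@perm_inj _ (tperm u v))).
    by apply: eq_bigr => i _; rewrite tp.
  exact: (part1' st').2.
have [s Hs] := IH chi'' (ltac:(lia)) st''.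
exists (tperm u v * s)%g => i; rewrite permM -Hs tp tpermK //.
Qed.
End Proofs.

Theorem lemma1 (n m : nat) (L : 'I_n -> {set 'I_m}) :
  (forall chi : alloc n m, stable L chi -> leximin_optimal L chi) /\
  (forall chi1 chi2 : alloc n m, stable L chi1 -> stable L chi2 ->
     exists s : {perm 'I_n}, forall i, profile chi2 i = profile chi1 (s i)).
Proof.
split; first by move=> chi; exact: part1'.
move=> chi1 chi2 st1 st2; exact: part2 st1 _ _ (leqnn _) st2.
Qed.
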